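(* Let $n\ge 0$, let $\lambda,\mu$ be decompositions of $n+1$, and for $1\le j\le n$ let $\phi(x_j)=I_{n+1}+E_{j+1,j}$ and $\phi(y_j)=I_{n+1}+E_{j,j+1}$ in $\mathrm{GL}_{n+1}(\mathbb{F}_2)$. Then the image of the homomorphism $\phi_{\lambda,\mu}\colon\langle A_{2,n}(S_{\lambda|\mu})\rangle\to\mathrm{GL}_{n+1}(\mathbb{F}_2)$ sending each generator $z\in S_{\lambda|\mu}$ to $\phi(z)$ (equivalently, the subgroup of $\mathrm{GL}_{n+1}(\mathbb{F}_2)$ generated by $\{\phi(z): z\in S_{\lambda|\mu}\}$) is $P_{\lambda|\mu}$.
   Context: $E_{i,j}$ is the matrix unit with $1$ in position $(i,j)$. A decomposition of $N$ is a finite sequence of positive integers $\lambda=(\lambda_1,\dots,\lambda_l)$ with sum $N$; $P_\lambda\le\mathrm{GL}_N(\mathbb{F}_2)$ is the group of invertible block upper triangular matrices with diagonal blocks of sizes $\lambda_1,\dots,\lambda_l$ in this order; $P_\mu^t$ is the group of transposes of elements of $P_\mu$; $P_{\lambda|\mu}=P_\lambda\cap P_\mu^t$. The stopover set is $\overline{s}(\lambda)=\{\lambda_1,\lambda_1+\lambda_2,\dots,\lambda_1+\dots+\lambda_{l-1}\}$, and $S_{\lambda|\mu}=\{x_i : 1\le i\le n,\ i\notin\overline{s}(\lambda)\}\cup\{y_j: 1\le j\le n,\ j\notin\overline{s}(\mu)\}$. The group $\langle A_{2,n}\rangle$ has generators $X=\{x_1,\dots,x_n,y_1,\dots,y_n\}$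 and relations: $z^2=e$ ($z\in X$); $(x_ix_{i+1})^4=(y_iy_{i+1})^4=e$ ($1\le i\le n-1$); $(x_iy_i)^3=e$ ($1\le i\le n$); $(zt)^2=e$ for every other pair of distinct $z,t\in X$; $(x_ix_{i+1}y_i)^3=(x_ix_{i+1}y_{i+1})^3=(x_iy_iy_{i+1})^3=(x_{i+1}y_iy_{i+1})^3=e$ ($1\le i\le n-1$); $(x_ix_{i+1}x_{i+2})^4=(y_iy_{i+1}y_{i+2})^4=e$ ($1\le i\le n-2$). For $S\subseteq X$, $\langle A_{2,n}(S)\rangle$ is the group generated by $S$ subject to exactly those relations above involving only elements of $S$. *)

(* Defs.v *)
From mathcomp Require Import all_boot all_order all_algebra all_fingroup.
Set Implicit Arguments. Unset Strict Implicit. Unset Printing Implicit Defensive.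
Import GRing.Theory.
Local Open Scope ring_scope.

Definition is_decomposition (N : nat) (lam : seq nat) : Prop :=
  all (fun k => 0 < k)%N lam /\ sumn lam = N.

(* Stopover set {l1, l1+l2, ..., l1+...+l_{l-1}} (as a sequence). *)
Definition stopovers (lam : seq nat) : seq nat :=
  take (size lam).-1 (scanl addn 0%N lam).

(* 0-based block index of the 0-based row/column i:
   number of stopovers s with s <= i (i.e. s < i+1). *)
Definition blk (lam : seq nat) (i : nat) : nat :=
  count (fun s => s <= i)%N (stopovers lam).

Definition block_upper (N : nat) (lam : seq nat) (A : 'M['F_2]_N) : bool :=
  [forall i : 'I_N, forall j : 'I_N, (A i j != 0) ==> (blk lam i <= blk lam j)%N].

Definition Pgrp (n : nat) (lam : seq nat) : {set {'GL_(n.+1)['F_2]}} :=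
  [set g : {'GL_(n.+1)['F_2]} | block_upper lam (GLval g)].

Definition Ptgrp (n : nat) (mu : seq nat) : {set {'GL_(n.+1)['F_2]}} :=
  [set g : {'GL_(n.+1)['F_2]} | block_upper mu (GLval g)^T].

Definition Plm (n : nat) (lam mu : seq nat) : {set {'GL_(n.+1)['F_2]}} :=
  Pgrp n lam :&: Ptgrp n mu.

(* phi(x_j) = I + E_{j+1,j}, phi(y_j) = I + E_{j,j+1}  (1-based j, 1 <= j <= n);
   in 0-based indices these are the entries (j, j-1) and (j-1, j). *)
Definition phi_x (n j : nat) : 'M['F_2]_(n.+1) :=
  1%:M + delta_mx (inord j) (inord j.-1).
Definition phi_y (n j : nat) : 'M['F_2]_(n.+1) :=
  1%:M + delta_mx (inord j.-1) (inord j).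

Definition phi_S (n : nat) (lam mu : seq nat) : {set {'GL_(n.+1)['F_2]}} :=
  [set g : {'GL_(n.+1)['F_2]} |
     [exists j : 'I_(n.+1), [&& (0 < j)%N, (nat_of_ord j \notin stopovers lam)
                              & GLval g == phi_x n j]]
  || [exists j : 'I_(n.+1), [&& (0 < j)%N, (nat_of_ord j \notin stopovers mu)
                              & GLval g == phi_y n j]]].

(* Main.v *)
Require Import Defs.
From mathcomp Require Import all_boot all_order all_algebra all_fingroup.
From mathcomp Require Import zify.
Set Implicit Arguments. Unset Strict Implicit. Unset Printing Implicit Defensive.
Import GRing.Theory.
Local Open Scope ring_scope.

Lemma F2_dbl (x : 'F_2) : x + x = 0.
Proof. by case: x => [[|[|k]] Hk] //; apply/val_inj. Qed.
Lemma F2_nz (x : 'F_2) : x != 0 -> x = 1.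
Proof. by case: x => [[|[|k]] Hk] //= _; apply/val_inj. Qed.

Lemma sum_nz (I : finType) (F : I -> 'F_2) :
  \sum_k F k != 0 -> exists k, F k != 0.
Proof.
move=> Hs; case: (pickP (fun k => F k != 0)) => [k Hk|H0]; first by exists k.
by move: Hs; rewrite big1 ?eqxx // => k _; apply/eqP; move: (H0 k) => /= /negbFE.
Qed.

Section Generic.
Variable n : nat.
Local Notation M := 'M['F_2]_n.+1.
Local Notation GL := {'GL_n.+1['F_2]}.

Definition tvm (i j : 'I_n.+1) : M := 1%:M + delta_mx i j.

Lemma tvm_mulE (r c : 'I_n.+1) (A : M) x y :
  (tvm r c *m A) x y = A x y + (x == r)%:R * A c y.
Proof.
rewrite mulmxDl mul1mx mxE; congr (_ + _); rewrite mxE.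
rewrite (bigD1 c) //= big1 => [|k /negbTE kc]; last by rewrite mxE kc andbF mul0r.
by rewrite mxE eqxx andbT addr0.
Qed.

Lemma mul_tvmE (r c : 'I_n.+1) (A : M) x y :
  (A *m tvm r c) x y = A x y + A x r * (y == c)%:R.
Proof.
rewrite mulmxDr mulmx1 mxE; congr (_ + _); rewrite mxE.
rewrite (bigD1 r) //= big1 => [|k /negbTE kc]; last by rewrite mxE kc /= mulr0.
by rewrite mxE eqxx /= addr0.
Qed.

Lemma tvm_sq i j : i != j -> tvm i j *m tvm i j = 1%:M.
Proof.
move=> ij; rewrite /tvm mulmxDl !mulmxDr !mul1mx mulmx1 mul_delta_mx_cond eq_sym (negbTE ij) mulr0n addr0.
rewrite -addrA; apply/matrixP => x y; rewrite !mxE F2_dbl addr0 //.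
Qed.

Lemma tvm_unit i j : i != j -> tvm i j \in unitmx.
Proof. by move=> ij; case: (mulmx1_unit (tvm_sq ij)). Qed.

Definition tv i j : GL := insubd (1%g : GL) (tvm i j).

Lemma tvE i j : i != j -> GLval (tv i j) = tvm i j.
Proof. by move=> ij; rewrite /tv insubdK //; exact: tvm_unit. Qed.

Lemma tv_sq i j : i != j -> (tv i j * tv i j = 1)%g.
Proof.
move=> ij; apply: val_inj; change (GLval (tv i j * tv i j) = GLval 1).
by rewrite GL_MxE tvE // tvm_sq.
Qed.
End Generic.

Section Elim.
Variable n : nat.
Local Notation M := 'M['F_2]_n.+1.
Local Notation GL := {'GL_n.+1['F_2]}.
Variable Q : rel 'I_n.+1.
Hypothesis Qrefl : reflexive Q.
Hypothesis Qtr : transitive Q.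

Definition suppQ (A : M) := [forall i, forall j, (A i j != 0) ==> Q i j].
Lemma suppQP (A : M) : reflect (forall i j, A i j != 0 -> Q i j) (suppQ A).
Proof.
apply: (iffP forallP) => H i; first by move=> j; exact/implyP/(forallP (H i)).
by apply/forallP=> j; apply/implyP/H.
Qed.

Definition GQ := [set g : GL | suppQ (GLval g)].

Lemma GQ_group_set : group_set GQ.
Proof.
apply/group_setP; split.
  rewrite inE; apply/suppQP => i j; rewrite GL_1E mxE.
  by have [->|ij] := eqVneq i j; [rewrite Qrefl | rewrite mulr0n eqxx].
move=> g h; rewrite !inE => /suppQP Hg /suppQP Hh; apply/suppQP => i j.
rewrite GL_MxE mxE => /sum_nz [k]; have [->|] := eqVneq (GLval g i k) 0; first by rewrite mul0r eqxx.
move=> /Hg Hik; have [->|] := eqVneq (GLval h k j) 0; first by rewrite mulr0 eqxx.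
by move=> /Hh Hkj _; exact: Qtr Hik Hkj.
Qed.
Canonical GQ_group := Group GQ_group_set.

Lemma tv_GQ i j : i != j -> Q i j -> tv i j \in GQ.
Proof.
move=> ij Qij; rewrite inE tvE //; apply/suppQP => x y; rewrite /tvm !mxE.
have [->|xy] := eqVneq x y; first by rewrite Qrefl.
rewrite mulr0n add0r; case: andP => [[/eqP-> /eqP->]//|]; by rewrite eqxx.
Qed.

Lemma GQ_supp (g : GL) i j : g \in GQ -> GLval g i j != 0 -> Q i j.
Proof. by rewrite inE => /suppQP; apply. Qed.

Variable H : {group GL}.
Hypothesis hT : forall i j, i != j -> Q i j -> tv i j \in H.

Definition done (A : M) (k : nat) :=
  forall c : 'I_n.+1, (c < k)%N -> forall x, A c x = (c == x)%:R /\ A x c = (x == c)%:R.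

Lemma done_base (g : GL) : done (GLval g) n.+1 -> g = 1%g.
Proof.
move=> D; apply: val_inj; change (GLval g = GLval 1); rewrite GL_1E.
by apply/matrixP => x y; rewrite [RHS]mxE; case: (D x (ltn_ord x) y).
Qed.

Section Step.
Variable c : 'I_n.+1.
Hypothesis IH : forall g : GL, g \in GQ -> done (GLval g) c.+1 -> g \in H.

Definition cnt (A : M) :=
  (#|[set r | (r != c) && (A r c != 0%R)]| + #|[set j | (j != c) && (A c j != 0%R)]|)%N.

Lemma done_c (A : M) : done A c -> A c c = 1 ->
  (forall c' : 'I_n.+1, (c' < c)%N -> A c' c = 0 /\ A c c' = 0).
Proof.
move=> D _ c' lt; case: (D c' lt c) => -> ->.
have ne : (c' == c) = false by apply/negbTE; rewrite neq_ltn lt.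
by rewrite ne eq_sym ne.
Qed.

Lemma clear m (g : GL) : g \in GQ -> done (GLval g) c -> GLval g c c = 1 ->
  (cnt (GLval g) <= m)%N -> g \in H.
Proof.
elim: m g => [|m IHm] g gQ D Dc.
  rewrite leqn0 addn_eq0 !cards_eq0 => /andP[/eqP S1 /eqP S2].
  apply: IH => // c' lt x; have [lt'|] := ltnP c' c; first exact: D.
  move=> le; have {lt le} ec : c' = c by apply/val_inj/eqP; rewrite eqn_leq le -ltnS lt.
  rewrite ec; split.
    have [<-|xc] := eqVneq c x; first by rewrite Dc.
    have : x \notin [set j | (j != c) && (GLval g c j != 0)] by rewrite S2 inE.
    by rewrite inE eq_sym xc /= negbK => /eqP->.
  have [->|xc] := eqVneq x c; first by rewrite Dc.
  have : x \notin [set r | (r != c) && (GLval g r c != 0)] by rewrite S1 inE.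
  by rewrite inE xc /= negbK => /eqP->.
move=> le; have [le'|] := leqP (cnt (GLval g)) m; first exact: IHm.
move=> gt; have {le gt}ecnt : cnt (GLval g) = m.+1 by apply/eqP; rewrite eqn_leq le gt.
set A := GLval g.
have [S1|/set0Pn [r]] := eqVneq [set r | (r != c) && (A r c != 0)] set0.
  have /set0Pn [j] : [set j | (j != c) && (A c j != 0)] != set0.
    by apply/negP => /eqP S2; move: ecnt; rewrite /cnt -/A S1 S2 !cards0.
  rewrite inE => /andP [jc Acj].
  have Qcj : Q c j by exact: GQ_supp Acj.
  have cj : c != j by rewrite eq_sym.
  have A'E : forall x y : 'I_n.+1, GLval (g * tv c j) x y = A x y + A x c * (y == j)%:R.
    by move=> x y; rewrite GL_MxE (tvE cj) mul_tvmE.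
  have -> : g = ((g * tv c j) * tv c j)%g by rewrite -mulgA (tv_sq cj) mulg1.
  rewrite groupM ?hT //; apply: IHm.
  - by rewrite groupM // tv_GQ.
  - move=> c' lt y; rewrite !A'E.
    have [Ac'c Acc'] := done_c D Dc lt.
    have jc' : (c' == j) = false.
      by apply/negbTE; apply: contraNneq Acj => <-; rewrite Acc'.
    by rewrite jc' mulr0 addr0 Ac'c mul0r addr0; exact: D.
  - by rewrite A'E (negbTE cj) mulr0 addr0.
  have E2 : [set y | (y != c) && (GLval (g * tv c j) c y != 0)] =
            [set y | (y != c) && (A c y != 0)] :\ j.
    apply/setP => y; rewrite !inE A'E Dc mul1r.
    have [->|yj] := eqVneq y j; first by rewrite (F2_nz Acj) andbF.
    by rewrite mulr0n addr0.
  have E1 : [set x | (x != c) && (GLval (g * tv c j) x c != 0)] =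
            [set x | (x != c) && (A x c != 0)].
    by apply/setP => x; rewrite !inE A'E (negbTE cj) mulr0 addr0.
  rewrite /cnt E1 E2; move: ecnt; rewrite /cnt [X in (_ + X)%N](cardsD1 j) inE jc Acj /= add1n addnS.
  by move=> [->].
  rewrite inE => /andP [rc Arc].
  have Qrc : Q r c by exact: GQ_supp Arc.
  have A'E : forall x y : 'I_n.+1, GLval (tv r c * g) x y = A x y + (x == r)%:R * A c y.
    by move=> x y; rewrite GL_MxE tvE // tvm_mulE.
  have -> : g = (tv r c * (tv r c * g))%g by rewrite mulgA tv_sq // mul1g.
  rewrite groupM ?hT //; apply: IHm.
  - by rewrite groupM // tv_GQ.
  - move=> c' lt x; rewrite !A'E.
    have [Ac'c Acc'] := done_c D Dc lt.
    have rc' : (c' == r) = false.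
      by apply/negbTE; apply: contraNneq Arc => <-; rewrite Ac'c.
    by rewrite rc' mul0r addr0 Acc' mulr0 addr0; exact: D.
  - by rewrite A'E eq_sym (negbTE rc) mul0r addr0.
  have E1 : [set x | (x != c) && (GLval (tv r c * g) x c != 0)] =
            [set x | (x != c) && (A x c != 0)] :\ r.
    apply/setP => x; rewrite !inE A'E Dc mulr1.
    have [->|xr] := eqVneq x r.
      by rewrite (F2_nz Arc) andbF.
    by rewrite mulr0n addr0.
  have E2 : [set y | (y != c) && (GLval (tv r c * g) c y != 0)] =
            [set y | (y != c) && (A c y != 0)].
    by apply/setP => y; rewrite !inE A'E [c == r]eq_sym (negbTE rc) mul0r addr0.
  rewrite /cnt E1 E2; move: ecnt; rewrite /cnt (cardsD1 r) inE rc Arc /= add1n addSn.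
  by move=> [->].
Qed.
Lemma clear' (g : GL) : g \in GQ -> done (GLval g) c -> GLval g c c = 1 -> g \in H.
Proof. by move=> a b d; exact: (clear a b d (leqnn _)). Qed.

Lemma step (g : GL) : g \in GQ -> done (GLval g) c -> g \in H.
Proof.
move=> gQ D; set A := GLval g.
have [Dc|Dc0] := eqVneq (A c c) 1; first exact: clear'.
have Acc0 : A c c = 0.
  by case: (A c c =P 0) => // /eqP/F2_nz Ac; rewrite Ac eqxx in Dc0.
have gV : (g^-1)%g \in GQ by rewrite groupV.
have E : (GLval g *m GLval (g^-1)%g) c c = 1.
  by rewrite -GL_MxE (mulgV g) GL_1E mxE eqxx.
have : (GLval g *m GLval (g^-1)%g) c c != 0 by rewrite E oner_neq0.
rewrite mxE => /sum_nz [k].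
have [->|Ack] := eqVneq (A c k) 0; first by rewrite mul0r eqxx.
have [->|Bkc] := eqVneq (GLval (g^-1)%g k c) 0; first by rewrite mulr0 eqxx.
move=> _; have Qkc := GQ_supp gV Bkc.
have kc : k != c by apply: contraNneq Ack => ->; rewrite Acc0.
have A'E : forall x y : 'I_n.+1, GLval (g * tv k c) x y = A x y + A x k * (y == c)%:R.
  by move=> x y; rewrite GL_MxE (tvE kc) mul_tvmE.
have -> : g = ((g * tv k c) * tv k c)%g by rewrite -mulgA (tv_sq kc) mulg1.
rewrite groupM ?hT //; apply: clear'.
- by rewrite groupM // tv_GQ.
- move=> c' lt y; rewrite !A'E.
  have c'c : (c' == c) = false by apply/negbTE; rewrite neq_ltn lt.
  have [_ Acc'] := D c' lt c.
  have [Ac'k _] := D c' lt k.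
  have c'k : (c' == k) = false.
    apply/negbTE; apply: contraNneq Ack => <-; rewrite Acc' [c == c']eq_sym c'c.
    by [].
  by rewrite c'c mulr0 addr0 Ac'k c'k mul0r addr0; exact: D.
- by rewrite A'E Acc0 add0r eqxx mulr1 (F2_nz Ack).
Qed.
End Step.

Lemma GQ_sub : GQ \subset H.
Proof.
apply/subsetP => g gQ.
suff: forall d (k : nat), (k + d = n.+1)%N -> forall g : GL, g \in GQ -> done (GLval g) k -> g \in H.
  by move/(_ n.+1 0%N (add0n _) g gQ); apply => c.
elim => [|d IHd] k kd g' g'Q D.
  rewrite addn0 in kd; rewrite kd in D; by rewrite (done_base D) group1.
have kn : (k < n.+1)%N by rewrite -kd addnS ltnS leq_addr.
apply: (@step (Ordinal kn)) => //= h hQ Dh; apply: (IHd k.+1) => //.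
by rewrite addSnnS.
Qed.
End Elim.

Lemma comm_tvm n (a b c : 'I_n.+1) : a != b -> b != c -> a != c ->
  tvm a b *m tvm b c *m tvm a b *m tvm b c = tvm a c.
Proof.
move=> ab bc ac.
have ab' := negbTE ab; have bc' := negbTE bc; have ac' := negbTE ac.
have ba' : (b == a) = false by rewrite eq_sym.
have cb' : (c == b) = false by rewrite eq_sym.
have ca' : (c == a) = false by rewrite eq_sym.
apply/matrixP => x y; rewrite !mul_tvmE !mxE.
have [->|xa] := eqVneq x a; try have [->|xb] := eqVneq x b; try have [->|xc] := eqVneq x c.
all: have [->|ya] := eqVneq y a; try have [->|yb] := eqVneq y b; try have [->|yc] := eqVneq y c.
all: rewrite ?eqxx ?ab' ?bc' ?ac' ?ba' ?cb' ?ca' //=.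
all: rewrite ?(mulr0n, mulr1n, mulr0, mul0r, mulr1, mul1r, addr0, add0r, F2_dbl) //.
all: try reflexivity.
Qed.

Lemma comm_tv n (a b c : 'I_n.+1) : a != b -> b != c -> a != c ->
  (tv a b * tv b c * tv a b * tv b c = tv a c)%g.
Proof.
move=> ab bc ac; apply: val_inj.
change (GLval (tv a b * tv b c * tv a b * tv b c) = GLval (tv a c)).
have := tvE ab; have := tvE bc; have := tvE ac.
move: (tv a b) (tv b c) (tv a c) => u v w Ew Ev Eu.
rewrite !GL_MxE Eu Ev Ew; exact: comm_tvm.
Qed.

Lemma blk_S l i : blk l i.+1 = (blk l i + count (pred1 i.+1) (stopovers l))%N.
Proof.
rewrite /blk; elim: (stopovers l) => //= x s ->; rewrite addnACA; congr (_ + _)%N.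
by rewrite leq_eqVlt ltnS; case: eqP => [->|_] /=; rewrite ?ltnn ?addn0.
Qed.

Lemma blk_mono l i j : (i <= j)%N -> (blk l i <= blk l j)%N.
Proof. by move=> ij; apply: sub_count => x /= xi; exact: leq_trans xi ij. Qed.

Lemma blk_nstop l i : (blk l i.+1 <= blk l i)%N -> i.+1 \notin stopovers l.
Proof.
rewrite blk_S -{2}[blk l i]addn0 leq_add2l leqn0 => /eqP.
by move/count_memPn.
Qed.

Section Spec.
Variables (n : nat) (lam mu : seq nat).
Local Notation GL := {'GL_n.+1['F_2]}.

Definition QL : rel 'I_n.+1 :=
  fun i j => (blk lam i <= blk lam j)%N && (blk mu j <= blk mu i)%N.

Lemma QL_refl : reflexive QL.
Proof. by move=> i; rewrite /QL !leqnn. Qed.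

Lemma QL_tr : transitive QL.
Proof.
move=> j i k /andP [h1 h2] /andP [h3 h4]; apply/andP; split.
  exact: leq_trans h1 h3.
exact: leq_trans h4 h2.
Qed.

Lemma Plm_GQ : Plm n lam mu = GQ QL.
Proof.
apply/setP => g; rewrite !inE /block_upper.
apply/andP/suppQP => [[/forallP H1 /forallP H2] i j nz | H].
  apply/andP; split; first by move: (forallP (H1 i) j) => /implyP; apply.
  by move: (forallP (H2 j) i) => /implyP; apply; rewrite mxE.
split; apply/forallP => i; apply/forallP => j; apply/implyP => nz.
  by case/andP: (H i j nz).
by rewrite mxE in nz; case/andP: (H j i nz).
Qed.

Lemma inord_neq (i j : nat) : (i < n.+1)%N -> (j < n.+1)%N -> i != j ->
  (inord i : 'I_n.+1) != inord j.
Proof. by move=> hi hj ij; rewrite -val_eqE /= !inordK. Qed.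

Lemma ltSS i : (i < n)%N -> (i.+1 < n.+1)%N. Proof. by []. Qed.

Lemma gen_x (i : nat) (hi : (i < n)%N) : (blk lam i.+1 <= blk lam i)%N ->
  tv (inord i.+1) (inord i) \in phi_S n lam mu.
Proof.
move=> hb; rewrite inE; apply/orP; left; apply/existsP; exists (Ordinal (ltSS hi)).
rewrite /= blk_nstop // tvE ?inord_neq ?(ltnW (ltSS hi)) ?(gtn_eqF (ltnSn i)) //.
by apply/eqP.
Qed.

Lemma gen_y (i : nat) (hi : (i < n)%N) : (blk mu i.+1 <= blk mu i)%N ->
  tv (inord i) (inord i.+1) \in phi_S n lam mu.
Proof.
move=> hb; rewrite inE; apply/orP; right; apply/existsP; exists (Ordinal (ltSS hi)).
rewrite /= blk_nstop // tvE ?inord_neq ?(ltnW (ltSS hi)) ?(ltn_eqF (ltnSn i)) //.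
by apply/eqP.
Qed.

Local Notation HH := (<<phi_S n lam mu>>%G).

Lemma upper d : forall i, (i + d.+1 <= n)%N -> (blk mu (i + d.+1) <= blk mu i)%N ->
  tv (inord i) (inord (i + d.+1)) \in <<phi_S n lam mu>>%g.
Proof.
elim: d => [|d IH] i hi hb.
  rewrite addn1 in hi hb *; apply: mem_gen; exact: gen_y.
move: hi hb; set k := (i + d.+1)%N; rewrite addnS -/k => hi hb.
have ik : (i <= k)%N by rewrite leq_addr.
have hk1 : (blk mu k.+1 <= blk mu k)%N.
  exact: leq_trans hb (blk_mono _ ik).
have hk2 : (blk mu k <= blk mu i)%N.
  exact: leq_trans (blk_mono _ (leqnSn k)) hb.
have ltk : (i < k)%N by rewrite /k addnS ltnS leq_addr.
have a2 : (k < n.+1)%N := ltnW hi.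
have a1 : (i < n.+1)%N := ltn_trans ltk a2.
have a3 : (k.+1 < n.+1)%N by [].
have a4 : i != k by rewrite ltn_eqF.
have a5 : k != k.+1 by rewrite ltn_eqF.
have a6 : i != k.+1 by rewrite ltn_eqF // ltnW.
rewrite -(@comm_tv _ _ (inord k)); first last.
- by apply: inord_neq; rewrite // eq_sym.
- by apply: inord_neq; rewrite // eq_sym.
- by apply: inord_neq; rewrite // eq_sym.
have t1 : tv (inord i) (inord k) \in <<phi_S n lam mu>>%g := IH i (ltnW hi) hk2.
have t2 : tv (inord k) (inord k.+1) \in <<phi_S n lam mu>>%g := mem_gen (gen_y hi hk1).
exact: (groupM (groupM (groupM t1 t2) t1) t2).
Qed.

Lemma lower d : forall i, (i + d.+1 <= n)%N -> (blk lam (i + d.+1) <= blk lam i)%N ->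
  tv (inord (i + d.+1)) (inord i) \in <<phi_S n lam mu>>%g.
Proof.
elim: d => [|d IH] i hi hb.
  rewrite addn1 in hi hb *; apply: mem_gen; exact: gen_x.
move: hi hb; set k := (i + d.+1)%N; rewrite addnS -/k => hi hb.
have ik : (i <= k)%N by rewrite leq_addr.
have hk1 : (blk lam k.+1 <= blk lam k)%N.
  exact: leq_trans hb (blk_mono _ ik).
have hk2 : (blk lam k <= blk lam i)%N.
  exact: leq_trans (blk_mono _ (leqnSn k)) hb.
have ltk : (i < k)%N by rewrite /k addnS ltnS leq_addr.
have a2 : (k < n.+1)%N := ltnW hi.
have a1 : (i < n.+1)%N := ltn_trans ltk a2.
have a3 : (k.+1 < n.+1)%N by [].
have a4 : i != k by rewrite ltn_eqF.
have a5 : k != k.+1 by rewrite ltn_eqF.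
have a6 : i != k.+1 by rewrite ltn_eqF // ltnW.
rewrite -(@comm_tv _ _ (inord k)); first last.
- by apply: inord_neq; rewrite // eq_sym.
- by apply: inord_neq; rewrite // eq_sym.
- by apply: inord_neq; rewrite // eq_sym.
have t1 : tv (inord k) (inord i) \in <<phi_S n lam mu>>%g := IH i (ltnW hi) hk2.
have t2 : tv (inord k.+1) (inord k) \in <<phi_S n lam mu>>%g := mem_gen (gen_x hi hk1).
exact: (groupM (groupM (groupM t2 t1) t2) t1).
Qed.

Lemma hT (i j : 'I_n.+1) : i != j -> QL i j -> tv i j \in <<phi_S n lam mu>>%g.
Proof.
move=> ij /andP [h1 h2].
have hj := ltn_ord j; have hi := ltn_ord i.
case: (ltngtP i j) => [lt|lt|e]; last by move: ij; rewrite (ord_inj e) eqxx.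
  have e : (i + (j - i).-1.+1)%N = j by rewrite prednK ?subn_gt0 // subnKC // ltnW.
  by have := @upper (j - i).-1 i; rewrite e !inord_val; apply.
have e : (j + (i - j).-1.+1)%N = i by rewrite prednK ?subn_gt0 // subnKC // ltnW.
by have := @lower (i - j).-1 j; rewrite e !inord_val; apply.
Qed.
End Spec.
Lemma blk_pred l (j : nat) : (0 < j)%N -> j \notin stopovers l -> blk l j = blk l j.-1.
Proof.
move=> j0 js; rewrite -{1}(prednK j0) blk_S.
by move/count_memPn: js; rewrite (prednK j0) => ->; rewrite addn0.
Qed.

Theorem proposition3 (n : nat) (lam mu : seq nat) :
  is_decomposition n.+1 lam -> is_decomposition n.+1 mu ->
  <<phi_S n lam mu>>%g = Plm n lam mu.
Proof.
move=> _ _; rewrite Plm_GQ; apply/eqP; rewrite eqEsubset; apply/andP; split.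
  rewrite (gen_subG _ (GQ_group (@QL_refl n lam mu) (@QL_tr n lam mu))).
  apply/subsetP => g; rewrite inE => /orP [] /existsP [j /and3P [j0 js /eqP gE]].
    have jn := ltn_ord j.
    have jn' : (j.-1 < n.+1)%N := leq_ltn_trans (leq_pred j) jn.
    have neq : (inord j : 'I_n.+1) != inord j.-1.
      apply: inord_neq => //.
      by move: j0; rewrite -ltn_predL => /gtn_eqF ->.
    have -> : g = tv (inord j) (inord j.-1).
      apply: val_inj; change (GLval g = GLval (tv (inord j) (inord j.-1))).
      by rewrite (tvE neq) gE.
    apply: (tv_GQ (@QL_refl n lam mu)) => //; rewrite /QL !inordK //.
    by rewrite blk_pred // leqnn blk_mono // leq_pred.
  have jn := ltn_ord j.
  have jn' : (j.-1 < n.+1)%N := leq_ltn_trans (leq_pred j) jn.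
  have neq : (inord j.-1 : 'I_n.+1) != inord j.
    apply: inord_neq => //.
    by move: j0; rewrite -ltn_predL => /ltn_eqF ->.
  have -> : g = tv (inord j.-1) (inord j).
    apply: val_inj; change (GLval g = GLval (tv (inord j.-1) (inord j))).
    by rewrite (tvE neq) gE.
  apply: (tv_GQ (@QL_refl n lam mu)) => //; rewrite /QL !inordK //.
  by rewrite [blk mu j]blk_pred // leqnn blk_mono // leq_pred.
apply: (GQ_sub (@QL_refl n lam mu) (@QL_tr n lam mu)).
exact: hT.
Qed.
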